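(* Let $\Gamma=(V,E,\psi)$ be a multigraph without loops. Then $\Gamma$ is a $G$-graph (i.e. $\Gamma\cong\Phi(G,S)$ for some group $G$ and multiset $S$ of elements of $G$) if and only if there exist a subgroup $H$ of $Aut(\Gamma)$ and a clique $C\subseteq V$ such that: (1) each orbit of the action of $H$ on $V$ is a stable set; (2) $C$ intersects every orbit of the action of $H$ on $V$; (3) for every $u\in C$, $Stab_H u$ is cyclic; (4) for every $u\in C$ and every orbit $O$ of $H$ with $u\notin O$, $Stab_H u$ acts regularly on the set of edges incident to $u$ whose other end-point lies in $O$.
   Context: A multigraph is a triple $(V,E,\psi)$ where $\psi$ assigns to each edge an unordered pair of vertices; parallel edges allowed. Automorphisms are pairs $(f,f^\#)$ of bijections of vertices and edges compatible with $\psi$, so $Aut(\Gamma)$ acts on $V$ and $E$. A clique is a set of pairwise adjacent vertices; a stable set is a set of pairwise non-adjacent vertices. An action is regular on $X$ if for all $x,y\in X$ exactly one group element sends $x$ to $y$. For a group $G$ and a multiset $S$ of elements of $G$, $\Phi(G,S)$ is the multigraph whose vertex set is the union over the members $s$ of $S$ (with multiplicity, a repeated element giving a separate copy of its cosets per occurrence) of $V_s=\{\langle s\rangle x: x\in G\}$ (right cosets), with, for $\langle s\rangle x\in V_s$, $\langle t\rangle y\in V_t$, $s,t$ distinct members of $S$, one edge labeled $g$ between them for each $g\in\langle s\rangle x\cap\langle t\rangle y$, and no other edges. A $G$-graph is a multigraph isomorphic (ignoring labels) to some $\Phi(G,S)$. *)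

(* Defs.v *)
From HB Require Import structures.
From mathcomp Require Import all_boot all_fingroup.
From mathcomp Require Import gproduct cyclic.
Set Implicit Arguments. Unset Strict Implicit. Unset Printing Implicit Defensive.

Local Open Scope group_scope.

(* A finite multigraph is given by finite types V (vertices), E (edges) and
   psi : E -> {set V}, psi e being the (unordered) set of end-points of e.
   Well-formedness: 1 <= #|psi e| <= 2; loopless: #|psi e| = 2%N. *)
Definition loopless (V E : finType) (psi : E -> {set V}) : Prop :=
  forall e, #|psi e| = 2%N.

Definition adjacent (V E : finType) (psi : E -> {set V}) (x y : V) : bool :=
  (x != y) && [exists e, (x \in psi e) && (y \in psi e)].

Definition is_clique (V E : finType) (psi : E -> {set V}) (A : {set V}) : Prop :=
  forall x y, x \in A -> y \in A -> x != y -> adjacent psi x y.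

Definition is_stable (V E : finType) (psi : E -> {set V}) (A : {set V}) : Prop :=
  forall x y, x \in A -> y \in A -> ~~ adjacent psi x y.

Definition Aut_mg (V E : finType) (psi : E -> {set V})
  : {set {perm V} * {perm E}} :=
  [set h : {perm V} * {perm E} | [forall e, psi (h.2 e) == h.1 @: psi e]].

Definition vorbit (V E : finType) (H : {set {perm V} * {perm E}}) (v : V)
  : {set V} := [set (h : {perm V} * {perm E}).1 v | h in H].

Definition vstab (V E : finType) (H : {set {perm V} * {perm E}}) (u : V)
  : {set {perm V} * {perm E}} := [set h in H | (h : {perm V} * {perm E}).1 u == u].

Definition acts_regularly_E (V E : finType) (K : {set {perm V} * {perm E}})
  (X : {set E}) : Prop :=
  forall x y, x \in X -> y \in X -> #|[set h in K | (h : {perm V} * {perm E}).2 x == y]| = 1%N.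

Definition edges_to (V E : finType) (psi : E -> {set V}) (u : V) (O : {set V})
  : {set E} :=
  [set e | (u \in psi e) && [exists w, (w \in O) && (w != u) && (w \in psi e)]].

(* Multigraph isomorphism of (V,E,psi) onto the "set-presented" multigraph
   with vertex set VS, edge set ES and end-point map psi' (defined on the
   ambient types V' E'). *)
Definition iso_onto (V E V' E' : finType) (psi : E -> {set V})
  (VS : {set V'}) (ES : {set E'}) (psi' : E' -> {set V'}) : Prop :=
  exists (f : V -> V') (g : E -> E'),
    [/\ injective f, f @: [set: V] = VS, injective g, g @: [set: E] = ES &
        forall e, psi' (g e) = f @: psi e].

Section Phi.
Variables (gT : finGroupType) (S : seq gT).

(* vertices of Phi(G,S): pairs (i, <s_i> x), the i-th member of S with a
   right coset of <s_i>; distinct occurrences give separate copies *)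
Definition Phi_V : {set 'I_(size S) * {set gT}} :=
  [set v : 'I_(size S) * {set gT} | v.2 \in rcosets <[nth 1 S v.1]> [set: gT]].

Definition Phi_E : {set 'I_(size S) * 'I_(size S) * gT} :=
  [set e : 'I_(size S) * 'I_(size S) * gT | (e.1.1 < e.1.2)%N].

Definition Phi_psi (e : 'I_(size S) * 'I_(size S) * gT)
  : {set 'I_(size S) * {set gT}} :=
  [set (e.1.1, <[nth 1 S e.1.1]> :* e.2); (e.1.2, <[nth 1 S e.1.2]> :* e.2)].
End Phi.

Definition is_G_graph (V E : finType) (psi : E -> {set V}) : Prop :=
  exists (gT : finGroupType) (S : seq gT),
    iso_onto psi (Phi_V S) (Phi_E S) (@Phi_psi gT S).

(* Main.v *)
Set Warnings "-notation-overridden,-parsing".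
Require Import Defs.

From HB Require Import structures.
From mathcomp Require Import all_boot all_fingroup.
From mathcomp Require Import gproduct cyclic zify.
Set Implicit Arguments. Unset Strict Implicit. Unset Printing Implicit Defensive.
Module Back.
Local Open Scope group_scope.

Section Back.
Variables (V E : finType) (psi : E -> {set V}).
Hypothesis Hll : loopless psi.
Variables (H : {group {perm V} * {perm E}}) (C : {set V}).
Hypothesis HA : H \subset Aut_mg psi.
Hypothesis HC : is_clique psi C.
Hypothesis H1 : forall v, is_stable psi (vorbit H v).
Hypothesis H2 : forall v, exists2 u, u \in C & u \in vorbit H v.
Hypothesis H3 : forall u, u \in C -> cyclic (vstab H u).
Hypothesis H4 : forall u v, u \in C -> u \notin vorbit H v ->
            acts_regularly_E (vstab H u) (edges_to psi u (vorbit H v)).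
Variable v0 : V.

Lemma psi_act h e : h \in H -> psi (h.2 e) = h.1 @: psi e.
Proof.
move=> hH; have := subsetP HA h hH; rewrite inE => /forallP/(_ e)/eqP; done.
Qed.

Lemma vorbitP v w : reflect (exists2 h, h \in H & w = h.1 v) (w \in vorbit H v).
Proof. by apply: (iffP imsetP). Qed.

Lemma orb_refl v : v \in vorbit H v.
Proof. by apply/vorbitP; exists 1; rewrite ?group1 ?perm1. Qed.

Lemma orb_act h v : h \in H -> h.1 v \in vorbit H v.
Proof. by move=> hH; apply/vorbitP; exists h. Qed.

Lemma orb_sym v w : w \in vorbit H v -> v \in vorbit H w.
Proof.
case/vorbitP=> h hH ->; apply/vorbitP; exists h^-1; first by rewrite groupV.
by rewrite /= permK.
Qed.

Lemma orb_trans v w x : w \in vorbit H v -> x \in vorbit H w -> x \in vorbit H v.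
Proof.
case/vorbitP=> h hH ->; case/vorbitP=> h' h'H ->; apply/vorbitP.
by exists (h * h'); rewrite ?groupM //= permM.
Qed.

Lemma cof_uniq u u' : u \in C -> u' \in C -> u' \in vorbit H u -> u' = u.
Proof.
move=> uC u'C uo; apply/eqP; apply/negPn/negP=> ne.
have := HC uC u'C; rewrite eq_sym ne => /(_ isT).
by rewrite (negbTE (H1 (orb_refl u) uo)).
Qed.

Definition cof v := odflt v0 [pick u in C | u \in vorbit H v].

Lemma cofP v : cof v \in C /\ cof v \in vorbit H v.
Proof.
rewrite /cof; case: pickP => [u /andP[]//|none].
by case: (H2 v) => u uC uo; have := none u; rewrite uC uo.
Qed.

Lemma cof_eq u v : u \in C -> u \in vorbit H v -> cof v = u.
Proof.
move=> uC uo; case: (cofP v) => cC co.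
apply: cof_uniq => //; exact: orb_trans (orb_sym uo) co.
Qed.

Definition gen c := odflt 1 [pick x | vstab H c == <[x]>].

Lemma genP c : c \in C -> vstab H c = <[gen c]>.
Proof.
move=> cC; rewrite /gen; case: pickP => [x /eqP //|none].
by case/cyclicP: (H3 cC) => x ex; have := none x; rewrite ex eqxx.
Qed.

Lemma vstabP c h : (h \in vstab H c) = (h \in H) && (h.1 c == c).
Proof. by rewrite inE. Qed.

Lemma gen_in c : c \in C -> gen c \in H.
Proof. by move=> cC; have := cycle_id (gen c); rewrite -genP // vstabP => /andP[]. Qed.

Notation K := (subg_of H).

Definition S : seq K := [seq subg H (gen c) | c <- enum C].
Definition ci (i : nat) := nth v0 (enum C) i.

Lemma size_S : size S = size (enum C).
Proof. by rewrite size_map. Qed.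

Lemma ci_in (i : 'I_(size S)) : ci i \in C.
Proof. by rewrite -mem_enum /ci mem_nth // -size_S. Qed.

Lemma sS (i : 'I_(size S)) : nth 1 S i = subg H (gen (ci i)).
Proof. by rewrite /S (nth_map v0) // -size_S. Qed.

Lemma idx_lt v : index (cof v) (enum C) < size S.
Proof. by rewrite size_S index_mem mem_enum; case: (cofP v). Qed.

Definition idx v : 'I_(size S) := Ordinal (idx_lt v).

Lemma ci_idx v : ci (idx v) = cof v.
Proof. by rewrite /ci /= nth_index // mem_enum; case: (cofP v). Qed.

Lemma idx_ci (i : 'I_(size S)) : idx (ci i) = i.
Proof.
apply: val_inj => /=; rewrite (cof_eq (ci_in i) (orb_refl _)).
by rewrite /ci index_uniq ?enum_uniq // -size_S.
Qed.

Lemma idx_orb v w : w \in vorbit H v -> idx w = idx v.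
Proof.
move=> wo; apply: val_inj => /=; congr index.
case: (cofP v) => cC co; apply: cof_eq => //; exact: orb_trans (orb_sym wo) co.
Qed.

Lemma idx_act h v : h \in H -> idx (h.1 v) = idx v.
Proof. by move=> hH; apply: idx_orb; apply: orb_act. Qed.

Lemma idx_eq v w : idx v = idx w -> w \in vorbit H v.
Proof.
move=> e; have : ci (idx v) = ci (idx w) by rewrite e.
rewrite !ci_idx => ec.
case: (cofP v) => _ cv; case: (cofP w) => _ cw.
apply: orb_trans cv _; rewrite ec; exact: orb_sym.
Qed.


Lemma sgM (k1 k2 : K) : sgval (k1 * k2) = sgval k1 * sgval k2.
Proof. by []. Qed.
Lemma sgV (k : K) : sgval (k^-1) = (sgval k)^-1.
Proof. by []. Qed.
Lemma fstM (a b : {perm V} * {perm E}) : (a * b).1 = a.1 * b.1.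
Proof. by []. Qed.
Lemma fstV (a : {perm V} * {perm E}) : (a^-1).1 = a.1^-1.
Proof. by []. Qed.
Lemma sndM (a b : {perm V} * {perm E}) : (a * b).2 = a.2 * b.2.
Proof. by []. Qed.
Lemma sndV (a : {perm V} * {perm E}) : (a^-1).2 = a.2^-1.
Proof. by []. Qed.

Lemma sgX (k : K) m : sgval (k ^+ m) = (sgval k) ^+ m.
Proof. by rewrite morphX ?in_setT. Qed.

Lemma stabK (i : 'I_(size S)) (k : K) :
  (k \in <[nth 1 S i]>) = ((sgval k).1 (ci i) == ci i).
Proof.
have cC := ci_in i; have gH := gen_in cC.
rewrite sS; apply/cycleP/idP => [[m ->]|hfx].
  have : sgval (subg H (gen (ci i)) ^+ m) \in vstab H (ci i).
    by rewrite sgX subgK // genP // mem_cycle.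
  by rewrite vstabP => /andP[].
have : sgval k \in vstab H (ci i) by rewrite vstabP subgP.
rewrite genP // => /cycleP[m em]; exists m; apply: subg_inj.
by rewrite sgX subgK.
Qed.

Definition fset v := [set k : K | (sgval k).1 (ci (idx v)) == v].
Definition f v := (idx v, fset v).

Lemma fset_coset v (k0 : K) : (sgval k0).1 (ci (idx v)) = v ->
  fset v = <[nth 1 S (idx v)]> :* k0.
Proof.
move=> e0; apply/setP => k; rewrite inE mem_rcoset stabK sgM sgV fstM fstV permM.
by rewrite (canF_eq (permKV _)) e0.
Qed.

Lemma ex_k0 v : exists k0 : K, (sgval k0).1 (ci (idx v)) = v.
Proof.
rewrite ci_idx; case: (cofP v) => _ /orb_sym/vorbitP[h hH e].
by exists (subg H h); rewrite subgK // -e.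
Qed.

Lemma f_act (i : 'I_(size S)) (k : K) :
  f ((sgval k).1 (ci i)) = (i, <[nth 1 S i]> :* k).
Proof.
have Hi : idx ((sgval k).1 (ci i)) = i by rewrite idx_act ?subgP // idx_ci.
rewrite /f (@fset_coset _ k) Hi //.
Qed.

Lemma f_inj : injective f.
Proof.
move=> v w e; have ei : idx v = idx w := congr1 fst e.
have es : fset v = fset w := congr1 snd e.
case: (ex_k0 v) => k0 ek.
have : k0 \in fset v by rewrite inE ek.
by rewrite es inE -ei ek => /eqP.
Qed.

Lemma f_im : f @: setT = Phi_V S.
Proof.
apply/setP => -[i X]; rewrite inE /=; apply/imsetP/rcosetsP.
  case=> v _ e; have eX : X = fset v := congr1 snd e.
  have ei : i = idx v := congr1 fst e.
  rewrite eX ei.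
  case: (ex_k0 v) => k0 ek.
  by exists k0; rewrite ?in_setT // (fset_coset ek).
case=> k _ ->; exists ((sgval k).1 (ci i)); first by rewrite in_setT.
by rewrite f_act.
Qed.

Lemma adj_of x y e : x \in psi e -> y \in psi e -> x != y -> adjacent psi x y.
Proof.
move=> xe ye ne; rewrite /adjacent ne /=; apply/existsP; exists e; by rewrite xe ye.
Qed.

Lemma idx_neq e x y : x \in psi e -> y \in psi e -> x != y -> idx x != idx y.
Proof.
move=> xe ye ne; apply/negP => /eqP /idx_eq yo.
by have := H1 (orb_refl x) yo; rewrite (adj_of xe ye ne).
Qed.

Lemma psi2 e x y : x \in psi e -> y \in psi e -> x != y -> psi e = [set x; y].
Proof.
move=> xe ye ne; apply/esym/eqP; rewrite eqEcard cards2 ne Hll leqnn andbT.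
by apply/subsetP => z; rewrite !inE => /orP[]/eqP->.
Qed.

Lemma ci_neq (i j : 'I_(size S)) : i != j -> ci i != ci j.
Proof. by apply: contra => /eqP e; rewrite -(idx_ci i) e idx_ci. Qed.

Lemma ci_notorb (i j : 'I_(size S)) : i != j -> ci i \notin vorbit H (ci j).
Proof. by apply: contra => /idx_orb; rewrite !idx_ci => ->. Qed.

Definition e0 (d : E) (i j : 'I_(size S)) :=
  odflt d [pick e | (ci i \in psi e) && (ci j \in psi e)].

Lemma ci_adj (i j : 'I_(size S)) : i != j ->
  exists e, (ci i \in psi e) && (ci j \in psi e).
Proof.
move=> ij; have := HC (ci_in i) (ci_in j) (ci_neq ij).
by rewrite /adjacent => /andP[_ /existsP].
Qed.

Lemma e0P d (i j : 'I_(size S)) : i != j ->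
  (ci i \in psi (e0 d i j)) && (ci j \in psi (e0 d i j)).
Proof.
move=> ij; rewrite /e0; case: pickP => [e //|none].
by case: (ci_adj ij) => e; rewrite none.
Qed.

Lemma e0_indep d d' (i j : 'I_(size S)) : i != j -> e0 d i j = e0 d' i j.
Proof.
move=> ij; rewrite /e0; case: pickP => [e //|none].
by case: (ci_adj ij) => e; rewrite none.
Qed.

Lemma psi_e0 d (i j : 'I_(size S)) : i != j -> psi (e0 d i j) = [set ci i; ci j].
Proof. by move=> ij; case/andP: (e0P d ij) => a b; apply: psi2 => //; apply: ci_neq. Qed.

Lemma e0_in d (i j : 'I_(size S)) : i != j ->
  e0 d i j \in edges_to psi (ci i) (vorbit H (ci j)).
Proof.
move=> ij; case/andP: (e0P d ij) => a b; rewrite inE a /=.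
apply/existsP; exists (ci j); rewrite orb_refl b andbT /=.
by rewrite eq_sym ci_neq.
Qed.

Lemma edge_move (i j : 'I_(size S)) d e x y : i != j -> x \in psi e -> y \in psi e ->
  idx x = i -> idx y = j -> exists k : K, (sgval k).2 (e0 d i j) = e.
Proof.
move=> ij xe ye ix iy.
have : ci i \in vorbit H x by apply: idx_eq; rewrite idx_ci.
case/vorbitP => h hH ehx.
pose e' := h.2 e.
have pe' : psi e' = h.1 @: psi e by apply: psi_act.
have e'in : e' \in edges_to psi (ci i) (vorbit H (ci j)).
  rewrite inE pe' ehx imset_f //=; apply/existsP; exists (h.1 y).
  rewrite imset_f // andbT; apply/andP; split.
    by apply: idx_eq; rewrite idx_act // idx_ci.
  apply/negP => /eqP ey; move: ij; rewrite -iy -(idx_act y hH) ey idx_act // ix.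
  by rewrite eqxx.
have := H4 (ci_in i) (ci_notorb ij) (e0_in d ij) e'in.
move/eqP/cards1P => [h' eh'].
have : h' \in [set h0 in vstab H (ci i) | h0.2 (e0 d i j) == e'] by rewrite eh' set11.
rewrite inE vstabP => /andP[/andP[h'H _] /eqP eh'e].
exists (subg H (h' * h^-1)); rewrite subgK ?groupM ?groupV //.
by rewrite sndM sndV permM eh'e /e' permK.
Qed.

Lemma edge_uniq (i j : 'I_(size S)) d (k1 k2 : K) : i != j ->
  (sgval k1).2 (e0 d i j) = (sgval k2).2 (e0 d i j) -> k1 = k2.
Proof.
move=> ij eq.
pose h := sgval k1 * (sgval k2)^-1.
have hH : h \in H by rewrite groupM ?groupV ?subgP.
have he : h.2 (e0 d i j) = e0 d i j by rewrite sndM sndV permM eq permK.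
have fixc : h.1 (ci i) = ci i.
  have : h.1 (ci i) \in psi (e0 d i j).
    by rewrite -he psi_act // imset_f //; case/andP: (e0P d ij).
  rewrite psi_e0 // !inE => /orP[/eqP //| /eqP ej].
  by move: ij; rewrite -(idx_ci i) -(idx_act (ci i) hH) ej !idx_ci eqxx.
have := H4 (ci_in i) (ci_notorb ij) (e0_in d ij) (e0_in d ij).
move/eqP/cards1P => [a ea].
have h1 : h \in [set h0 in vstab H (ci i) | h0.2 (e0 d i j) == e0 d i j].
  by rewrite inE vstabP hH fixc he !eqxx.
have o1 : 1 \in [set h0 in vstab H (ci i) | h0.2 (e0 d i j) == e0 d i j].
  by rewrite inE vstabP group1 !perm1 !eqxx.
rewrite ea !inE in h1 o1.
apply: subg_inj; apply/eqP; rewrite eq_mulgV1 -/h (eqP h1) -(eqP o1) //.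
Qed.

Definition spec (e : E) (t : 'I_(size S) * 'I_(size S) * K) : bool :=
  (t.1.1 < t.1.2)%N && ((sgval t.2).2 (e0 e t.1.1 t.1.2) == e).

Definition g e := odflt (idx v0, idx v0, 1) [pick t | spec e t].

Lemma ord_neq (i j : 'I_(size S)) : (i < j)%N -> i != j.
Proof. by move=> lt; rewrite -(inj_eq val_inj) /= neq_ltn lt. Qed.

Lemma spec_ex e : exists t, spec e t.
Proof.
have /cards2P [x [y [ne pe]]] : #|psi e| == 2 by rewrite Hll.
have xe : x \in psi e by rewrite pe !inE eqxx.
have ye : y \in psi e by rewrite pe !inE eqxx orbT.
have nxy := idx_neq xe ye ne.
case: (ltngtP (idx x) (idx y)) => [lt|gt|eq].
- have [k ek] := edge_move e (ord_neq lt) xe ye erefl erefl.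
  by exists (idx x, idx y, k); rewrite /spec /= lt ek eqxx.
- have [k ek] := edge_move e (ord_neq gt) ye xe erefl erefl.
  by exists (idx y, idx x, k); rewrite /spec /= gt ek eqxx.
- by move: nxy; rewrite (val_inj eq) eqxx.
Qed.

Lemma spec_psi e t : spec e t ->
  psi e = [set (sgval t.2).1 (ci t.1.1); (sgval t.2).1 (ci t.1.2)].
Proof.
case/andP => lt /eqP <-.
by rewrite psi_act ?subgP // psi_e0 ?ord_neq // imsetU1 imset_set1.
Qed.

Lemma idx_img e t : spec e t -> idx @: psi e = [set t.1.1; t.1.2].
Proof.
move=> s; rewrite (spec_psi s) imsetU1 imset_set1 !idx_act ?subgP //.
by rewrite !idx_ci.
Qed.

Lemma pair_ord (a b c d : 'I_(size S)) : [set a; b] = [set c; d] ->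
  (a < b)%N -> (c < d)%N -> a = c /\ b = d.
Proof.
move=> E0 ab cd.
have ha : a \in [set c; d] by rewrite -E0 !inE eqxx.
have hb : b \in [set c; d] by rewrite -E0 !inE eqxx orbT.
have hc : c \in [set a; b] by rewrite E0 !inE eqxx.
move: ha hb hc; rewrite !inE -!(inj_eq val_inj) /=.
move=> /orP[]/eqP e1 /orP[]/eqP e2 /orP[]/eqP e3; split; apply: val_inj => /=; lia.
Qed.

Lemma spec_uniq e t t' : spec e t -> spec e t' -> t = t'.
Proof.
move: t t' => [[i j] k] [[i' j'] k'] s s'.
have := idx_img s'; rewrite (idx_img s) /= => E0.
case/andP: (s) => lt /eqP ek; case/andP: (s') => lt' /eqP ek'.
have [ei ej] := pair_ord E0 lt lt'.
move: ek ek' lt lt'; rewrite /= -ei -ej => ek ek' lt _.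
have -> : k = k' by apply: (@edge_uniq i j e k k' (ord_neq lt)); rewrite ek ek'.
by rewrite ei ej.
Qed.

Lemma gP e : spec e (g e).
Proof.
rewrite /g; case: pickP => [t // | none].
by case: (spec_ex e) => t; rewrite none.
Qed.

Lemma g_eq e t : spec e t -> g e = t.
Proof. exact: spec_uniq (gP e). Qed.

Lemma g_inj : injective g.
Proof.
move=> e e' E0; have s := gP e; have s' := gP e'; rewrite E0 in s.
case/andP: s => lt /eqP ee; case/andP: s' => _ /eqP ee'.
apply: etrans (esym ee) _; apply: etrans _ ee'.
by rewrite (e0_indep e e' (ord_neq lt)).
Qed.

Lemma g_im : g @: setT = Phi_E S.
Proof.
apply/setP => -[[i j] k]; rewrite inE /=; apply/imsetP/idP.
  by case=> e _ ee; have := gP e; rewrite -ee => /andP[].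
move=> lt; case: (ci_adj (ord_neq lt)) => d _.
exists ((sgval k).2 (e0 d i j)); first by rewrite in_setT.
apply/esym/g_eq; rewrite /spec /= lt /=.
by rewrite (e0_indep _ d (ord_neq lt)).
Qed.

Lemma psi_g e : Phi_psi (g e) = f @: psi e.
Proof.
move: (gP e); case: (g e) => [[i j] k] s.
by rewrite (spec_psi s) /= imsetU1 imset_set1 !f_act /Phi_psi.
Qed.

Lemma back_main : is_G_graph psi.
Proof.
exists (subg_of H), S, f, g; split.
- exact: f_inj.
- exact: f_im.
- exact: g_inj.
- exact: g_im.
- by move=> e; rewrite psi_g.
Qed.

End Back.
End Back.

Module Fwd.
Local Open Scope group_scope.
Section Fwd.
Variables (V E : finType) (psi : E -> {set V}) (gT : finGroupType) (S : seq gT).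
Variables (f : V -> 'I_(size S) * {set gT}) (g : E -> 'I_(size S) * 'I_(size S) * gT).
Hypotheses (finj : injective f) (fim : f @: setT = Phi_V S).
Hypotheses (ginj : injective g) (gim : g @: setT = Phi_E S).
Hypothesis hpsi : forall e, @Phi_psi gT S (g e) = f @: psi e.

Local Notation s i := (nth 1 S i).
Definition rV (a : gT) (w : 'I_(size S) * {set gT}) := (w.1, w.2 :* a).
Definition rE (a : gT) (t : 'I_(size S) * 'I_(size S) * gT) := (t.1, t.2 * a).

Lemma f_in v : f v \in Phi_V S.
Proof. by rewrite -fim imset_f. Qed.
Lemma g_in e : g e \in Phi_E S.
Proof. by rewrite -gim imset_f. Qed.

Lemma rV_in a w : w \in Phi_V S -> rV a w \in Phi_V S.
Proof.
rewrite !inE /= => /rcosetsP[x _ ->]; apply/rcosetsP; exists (x * a) => //.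
by rewrite rcosetM.
Qed.
Lemma rE_in a t : t \in Phi_E S -> rE a t \in Phi_E S.
Proof. by rewrite !inE. Qed.

Lemma f_ex w : w \in Phi_V S -> exists v, f v = w.
Proof. by rewrite -fim => /imsetP[v _ ->]; exists v. Qed.
Lemma g_ex t : t \in Phi_E S -> exists e, g e = t.
Proof. by rewrite -gim => /imsetP[e _ ->]; exists e. Qed.

Lemma rV_inj a : injective (rV a).
Proof.
move=> [i X] [j Y]; rewrite /rV /= => -[-> eXY].
by rewrite -(rcosetK a X) eXY rcosetK.
Qed.
Lemma rE_inj a : injective (rE a).
Proof. by move=> [p x] [q y]; rewrite /rE /= => -[-> /mulIg ->]. Qed.

Definition pVf a v := odflt v [pick u | f u == rV a (f v)].
Lemma pVfP a v : f (pVf a v) = rV a (f v).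
Proof.
rewrite /pVf; case: pickP => [u /eqP //|none].
by case: (f_ex (rV_in a (f_in v))) => u fu; have := none u; rewrite fu eqxx.
Qed.
Lemma pVf_inj a : injective (pVf a).
Proof. by move=> v w e; apply/finj/(@rV_inj a); rewrite -!pVfP e. Qed.
Definition pV a : {perm V} := perm (@pVf_inj a).
Lemma pVE a v : f (pV a v) = rV a (f v).
Proof. by rewrite permE pVfP. Qed.

Definition pEf a e := odflt e [pick u | g u == rE a (g e)].
Lemma pEfP a e : g (pEf a e) = rE a (g e).
Proof.
rewrite /pEf; case: pickP => [u /eqP //|none].
by case: (g_ex (rE_in a (g_in e))) => u fu; have := none u; rewrite fu eqxx.
Qed.
Lemma pEf_inj a : injective (pEf a).
Proof. by move=> v w e; apply/ginj/(@rE_inj a); rewrite -!pEfP e. Qed.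
Definition pE a : {perm E} := perm (@pEf_inj a).
Lemma pEE a e : g (pE a e) = rE a (g e).
Proof. by rewrite permE pEfP. Qed.

Definition phi a : {perm V} * {perm E} := (pV a, pE a).

Lemma phiM a b : phi (a * b) = phi a * phi b.
Proof.
rewrite /phi; congr (_, _); apply/permP => x; rewrite permM.
  by apply: finj; rewrite !pVE /rV /= rcosetM.
by apply: ginj; rewrite !pEE /rE /= mulgA.
Qed.

Lemma phi1 : phi 1 = 1.
Proof.
rewrite /phi; congr (_, _); apply/permP => x; rewrite perm1.
  by apply: finj; rewrite !pVE /rV /= rcoset1; case: (f x).
by apply: ginj; rewrite !pEE /rE /= mulg1; case: (g x).
Qed.

Lemma phiX a m : phi (a ^+ m) = phi a ^+ m.
Proof. by elim: m => [|m IH]; rewrite ?expg0 ?phi1 // !expgS phiM IH. Qed.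

Definition HH := [set phi a | a in [set: gT]].
Lemma HH_group : group_set HH.
Proof.
apply/andP; split; first by apply/imsetP; exists 1; rewrite ?in_setT ?phi1.
apply/subsetP => x /mulsgP[h1 h2 /imsetP[a _ ->] /imsetP[b _ ->] ->].
by apply/imsetP; exists (a * b); rewrite ?in_setT ?phiM.
Qed.
Definition HG : {group {perm V} * {perm E}} := Group HH_group.

Lemma HGP h : reflect (exists a, h = phi a) (h \in HG).
Proof. by apply: (iffP imsetP) => [[a _ ->]|[a ->]]; exists a; rewrite ?in_setT. Qed.

Lemma Phi_psi_rE a t : @Phi_psi gT S (rE a t) = rV a @: @Phi_psi gT S t.
Proof.
by move: t => [[i j] x]; rewrite /Phi_psi /rE /rV /= imsetU1 imset_set1 /= !rcosetM.
Qed.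

Lemma HG_aut : HG \subset Aut_mg psi.
Proof.
apply/subsetP => h /HGP[a ->]; rewrite inE; apply/forallP => e /=; apply/eqP.
apply: (imset_inj finj); rewrite -hpsi pEE Phi_psi_rE hpsi -!imset_comp.
by apply: eq_imset => v /=; rewrite pVE.
Qed.

Definition CC := [set v | 1 \in (f v).2].

Lemma f2 v : exists x, (f v).2 = <[s (f v).1]> :* x.
Proof. by have := f_in v; rewrite inE => /rcosetsP[x _ ->]; exists x. Qed.

Lemma fC u : u \in CC -> (f u).2 = <[s (f u).1]>.
Proof.
case: (f2 u) => x ex; rewrite inE ex mem_rcoset mul1g => hx.
by rewrite rcoset_id // -(invgK x) groupV.
Qed.

Lemma orbP v x : reflect (exists a, x = pV a v) (x \in vorbit HG v).
Proof.
apply: (iffP imsetP) => [[h /HGP[a ->] ->]|[a ->]]; first by exists a.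
by exists (phi a) => //; apply/HGP; exists a.
Qed.

Lemma orb_fst v x : x \in vorbit HG v -> (f x).1 = (f v).1.
Proof. by case/orbP => a ->; rewrite pVE. Qed.

Lemma same_edge e x y : x \in psi e -> y \in psi e -> (f x).1 = (f y).1 -> x = y.
Proof.
move=> xe ye.
have hx : f x \in @Phi_psi gT S (g e) by rewrite hpsi imset_f.
have hy : f y \in @Phi_psi gT S (g e) by rewrite hpsi imset_f.
have lt := g_in e; rewrite inE in lt.
move: hx hy lt; rewrite /Phi_psi; case: (g e) => [[i j] z] /=.
rewrite !inE => /orP[]/eqP ex /orP[]/eqP ey lt; rewrite ex ey /= => eq;
  try by apply: finj; rewrite ex ey.
- by move: lt; rewrite eq ltnn.
- by move: lt; rewrite eq ltnn.
Qed.

Lemma stable v : is_stable psi (vorbit HG v).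
Proof.
move=> x y xo yo; apply/negP; rewrite /adjacent => /andP[ne /existsP[e /andP[xe ye]]].
by move: ne; rewrite (same_edge xe ye) ?eqxx // (orb_fst xo) (orb_fst yo).
Qed.

Lemma edge_ij (i j : 'I_(size S)) : i != j -> exists e,
  ((i, <[s i]>) \in f @: psi e) && ((j, <[s j]>) \in f @: psi e).
Proof.
move=> ij; case: (ltngtP i j) => [lt|gt|eq].
- have [e ge] : exists e, g e = (i, j, 1) by apply: g_ex; rewrite inE.
  by exists e; rewrite -hpsi ge /Phi_psi /= !rcoset1 !inE !eqxx orbT.
- have [e ge] : exists e, g e = (j, i, 1) by apply: g_ex; rewrite inE.
  by exists e; rewrite -hpsi ge /Phi_psi /= !rcoset1 !inE !eqxx orbT.
- by move: ij; rewrite (val_inj eq) eqxx.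
Qed.

Lemma clique : is_clique psi CC.
Proof.
move=> u w uC wC ne.
have ij : (f u).1 != (f w).1.
  apply: contra ne => /eqP eij; apply/eqP/finj.
  by rewrite [f u]surjective_pairing [f w]surjective_pairing (fC uC) (fC wC) eij.
case: (edge_ij ij) => e /andP[hu hw].
rewrite /adjacent ne; apply/existsP; exists e.
rewrite -!(mem_imset _ _ finj) [f u]surjective_pairing [f w]surjective_pairing.
by rewrite (fC uC) (fC wC) hu hw.
Qed.

Lemma meets v : exists2 u, u \in CC & u \in vorbit HG v.
Proof.
case: (f2 v) => x ex; exists (pV x^-1 v).
  by rewrite inE pVE /rV /= ex rcosetK group1.
by apply/orbP; exists x^-1.
Qed.

Lemma vstabE u h : u \in CC ->
  reflect (exists2 a, a \in <[s (f u).1]> & h = phi a) (h \in vstab HG u).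
Proof.
move=> uC; rewrite inE; apply: (iffP andP).
  case=> /HGP[a ->] /eqP hfix; exists a => //.
  have : f (pV a u) = f u by rewrite hfix.
  move=> /(congr1 snd); rewrite pVE /= (fC uC) => ea.
  by rewrite -ea rcoset_refl.
case=> a ain ->; split; first by apply/HGP; exists a.
apply/eqP/finj; rewrite pVE /rV; move: ain (fC uC); case: (f u) => a0 A /= ain ->.
by rewrite rcoset_id.
Qed.

Lemma stab_cyc u : u \in CC -> cyclic (vstab HG u).
Proof.
move=> uC; apply/cyclicP; exists (phi (s (f u).1)); apply/setP => h.
apply/(@vstabE u h uC)/cycleP.
  by case=> a /cycleP[m ->] ->; exists m; rewrite phiX.
by case=> m ->; exists (s (f u).1 ^+ m); rewrite ?mem_cycle ?phiX.
Qed.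

Lemma not_orb u v : u \in CC -> u \notin vorbit HG v -> (f u).1 != (f v).1.
Proof.
move=> uC; apply: contra => /eqP eq; case: (f2 v) => x ex.
apply/orbP; exists x^-1; apply: finj; rewrite pVE /rV /= ex rcosetK.
by rewrite [f u]surjective_pairing (fC uC) eq.
Qed.

Lemma pair_case (a k i j : 'I_(size S)) z X :
  (a, <[s a]>) \in [set (i, <[s i]> :* z); (j, <[s j]> :* z)] ->
  (k, X) \in [set (i, <[s i]> :* z); (j, <[s j]> :* z)] ->
  a != k -> (i < j)%N ->
  z \in <[s a]> /\ (i, j) = (if (a < k)%N then (a, k) else (k, a)).
Proof.
rewrite !inE !xpair_eqE.
move=> /orP[/andP[/eqP ai /eqP ez]|/andP[/eqP aj /eqP ez]]
  /orP[/andP[/eqP ki _]|/andP[/eqP kj _]] ak lt; subst.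
- by rewrite eqxx in ak.
- by split; [rewrite ez rcoset_refl | rewrite lt].
- by split; [rewrite ez rcoset_refl | rewrite ltnNge (ltnW lt)].
- by rewrite eqxx in ak.
Qed.

Definition P u v : 'I_(size S) * 'I_(size S) :=
  if ((f u).1 < (f v).1)%N then ((f u).1, (f v).1) else ((f v).1, (f u).1).

Lemma edge_char u v e : u \in CC -> u \notin vorbit HG v ->
  e \in edges_to psi u (vorbit HG v) ->
  exists2 z, z \in <[s (f u).1]> & g e = (P u v, z).
Proof.
move=> uC uo; rewrite inE => /andP[ue /existsP[w /andP[/andP[wo _] we]]].
have wk : (f w).1 = (f v).1 := orb_fst wo.
have hu : ((f u).1, <[s (f u).1]>) \in @Phi_psi gT S (g e).
  by rewrite -(fC uC) -surjective_pairing hpsi imset_f.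
have hw : ((f v).1, (f w).2) \in @Phi_psi gT S (g e).
  by rewrite -wk -surjective_pairing hpsi imset_f.
have lt := g_in e; rewrite inE in lt.
move: hu hw lt (not_orb uC uo); rewrite /P /Phi_psi; case: (g e) => [[i j] z] /=.
move=> hu hw lt ne; have [zin eP] := pair_case hu hw ne lt.
by exists z; rewrite // -eP.
Qed.

Lemma regular u v : u \in CC -> u \notin vorbit HG v ->
  acts_regularly_E (vstab HG u) (edges_to psi u (vorbit HG v)).
Proof.
move=> uC uo x y xin yin.
have [z1 z1in gx] := edge_char uC uo xin.
have [z2 z2in gy] := edge_char uC uo yin.
apply/eqP/cards1P; exists (phi (z1^-1 * z2)); apply/setP => h; rewrite in_set1 [in LHS]inE.
apply/andP/eqP.
  case=> hst /eqP hxy; case/(@vstabE u h uC): hst hxy => a ain -> hxy; congr phi.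
  have : g (pE a x) = g y by rewrite hxy.
  by rewrite pEE gx gy /rE /= => -[<-]; rewrite mulKg.
move=> ->; split.
  by apply/(@vstabE u _ uC); exists (z1^-1 * z2); rewrite // groupM ?groupV.
by apply/eqP/ginj; rewrite /phi /= pEE gx gy /rE /= mulKVg.
Qed.

Lemma fwd_main : exists (H : {group {perm V} * {perm E}}) (C : {set V}),
     H \subset Aut_mg psi /\ is_clique psi C /\
     [/\ (forall v, is_stable psi (vorbit H v)),
         (forall v, exists2 u, u \in C & u \in vorbit H v),
         (forall u, u \in C -> cyclic (vstab H u)) &
         (forall u v, u \in C -> u \notin vorbit H v ->
            acts_regularly_E (vstab H u) (edges_to psi u (vorbit H v)))].
Proof.
exists HG, CC; split; first exact: HG_aut.
split; first exact: clique.
split; [exact: stable | exact: meets | exact: stab_cyc | exact: regular].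
Qed.

End Fwd.
Local Open Scope group_scope.
End Fwd.
Local Open Scope group_scope.

Theorem corollary2 (V E : finType) (psi : E -> {set V}) :
  loopless psi ->
  (is_G_graph psi <->
   exists (H : {group {perm V} * {perm E}}) (C : {set V}),
     H \subset Aut_mg psi /\ is_clique psi C /\
     [/\ (forall v, is_stable psi (vorbit H v)),
         (forall v, exists2 u, u \in C & u \in vorbit H v),
         (forall u, u \in C -> cyclic (vstab H u)) &
         (forall u v, u \in C -> u \notin vorbit H v ->
            acts_regularly_E (vstab H u) (edges_to psi u (vorbit H v)))]).
Proof.
move=> Hll; split.
  case=> gT [S [f [g [finj fim ginj gim hpsi]]]].
  exact: (Fwd.fwd_main finj fim ginj gim hpsi).
case=> H [C [HA [HC [H1 H2 H3 H4]]]].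
case: (pickP (fun _ : V => true)) => [v0 _|V0].
  exact: (Back.back_main Hll HA HC H1 H2 H3 H4 v0).
have noV : V -> False by move=> v; have := V0 v.
have noE : E -> False.
  move=> e; have := Hll e.
  have -> : psi e = set0 by apply/setP => x; case: (noV x).
  by rewrite cards0.
exists {perm V}, [::].
exists (fun v => False_rect _ (noV v)), (fun e => False_rect _ (noE e)); split.
- by move=> x; case: (noV x).
- by apply/setP => -[[i ?] ?].
- by move=> x; case: (noE x).
- by apply/setP => -[[[i ?] ?] ?].
- by move=> e; case: (noE e).
Qed.
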